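(* Let $\alpha>0$ with $\alpha\neq1$. There is a constant $C=C(\alpha)$ such that for every $R>0$, every $b\in\mathbb{R}$, and each choice of sign $\pm$, $$\Big|\int_0^R e^{i(b e^{x}\pm e^{\alpha x})}\,dx\Big|\le C.$$ *)

(* Defs.v *)
From Stdlib Require Import Reals.
From Coquelicot Require Export Coquelicot.
Open Scope R_scope.

Definition cis (t : R) : C := (cos t, sin t).

(* Main.v *)
Require Import Defs.
From Stdlib Require Import Reals Lra.
From Coquelicot Require Import Coquelicot.
Open Scope R_scope.


Definition P (al b m th x : R) := b*exp x + m*exp(al*x) + th.
Definition D1 (al b m x : R) := b*exp x + m*al*exp(al*x).
Definition D2 (al b m x : R) := b*exp x + m*(al*al)*exp(al*x).

Lemma P_deriv al b m th x : is_derive (P al b m th) x (D1 al b m x).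
Proof. unfold P, D1. auto_derive; auto. ring. Qed.
Lemma D1_deriv al b m x : is_derive (D1 al b m) x (D2 al b m x).
Proof. unfold D1, D2. auto_derive; auto. ring. Qed.

Lemma cont_cosP al b m th x : continuous (fun x => cos (P al b m th x)) x.
Proof. apply (ex_derive_continuous (K:=R_AbsRing) (V:=R_NormedModule)). unfold P. auto_derive. auto. Qed.

Lemma div_bound u y lam : 0 < lam -> lam <= Rabs y -> Rabs u <= 1 -> Rabs (u / y) <= / lam.
Proof.
  intros Hl Hy Hu. assert (Hy0 : 0 < Rabs y) by lra.
  unfold Rdiv. rewrite Rabs_mult, Rabs_inv.
  apply Rle_trans with (1 * / Rabs y).
  - apply Rmult_le_compat_r; [left; apply Rinv_0_lt_compat; lra| lra].
  - rewrite Rmult_1_l. apply Rinv_le_contravar; lra.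
Qed.

Lemma L1 al b m th a c lam : a <= c -> 0 < lam ->
  (forall x, a <= x <= c -> lam <= Rabs (D1 al b m x)) ->
  ((forall x, a <= x <= c -> 0 <= D2 al b m x) \/ (forall x, a <= x <= c -> D2 al b m x <= 0)) ->
  Rabs (RInt (fun x => cos (P al b m th x)) a c) <= 4 / lam.
Proof.
  intros Hac Hl HD1 HD2.
  assert (Hmin : Rmin a c = a) by (apply Rmin_left; lra).
  assert (Hmax : Rmax a c = c) by (apply Rmax_right; lra).
  assert (Hnz : forall x, a <= x <= c -> D1 al b m x <> 0).
  { intros x Hx Hc. specialize (HD1 x Hx). rewrite Hc, Rabs_R0 in HD1. lra. }
  set (F := fun x => sin (P al b m th x) / D1 al b m x).
  set (H := fun x => sin (P al b m th x) * D2 al b m x / (D1 al b m x * D1 al b m x)).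
  set (f := fun x => cos (P al b m th x)).
  assert (HdF : forall x, a <= x <= c -> is_derive F x (f x - H x)).
  { intros x Hx. specialize (Hnz x Hx). unfold F, f, H.
    evar_last.
    { apply (is_derive_div (fun x => sin (P al b m th x))).
      - apply (is_derive_comp sin). apply is_derive_sin. apply P_deriv.
      - apply D1_deriv.
      - exact Hnz. }
    unfold scal; simpl; unfold mult; simpl. field. exact Hnz. }
  assert (HcH : forall x, a <= x <= c -> continuous H x).
  { intros x Hx. specialize (Hnz x Hx). apply (ex_derive_continuous (K:=R_AbsRing) (V:=R_NormedModule)). unfold H, P, D1, D2 in *.
    auto_derive; repeat split; auto; try (intro Hc; apply Hnz; nra). }
  assert (HcfH : forall x, a <= x <= c -> continuous (fun x => f x - H x) x).
  { intros x Hx. apply (continuous_minus f H). apply cont_cosP. auto. }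
  assert (HI1 : is_RInt (fun x => f x - H x) a c (minus (F c) (F a))).
  { apply (is_RInt_derive F (fun x => f x - H x)); rewrite Hmin, Hmax; auto. }
  assert (HexH : ex_RInt H a c).
  { apply (ex_RInt_continuous (V:=R_CompleteNormedModule)). rewrite Hmin, Hmax; auto. }
  assert (Hf : RInt f a c = (F c - F a) + RInt H a c).
  { apply (is_RInt_unique (V:=R_CompleteNormedModule)). apply (is_RInt_ext (V:=R_NormedModule) (fun y => plus (f y - H y) (H y))).
    { intros; unfold plus; simpl; ring. }
    apply (is_RInt_plus _ _ _ _ _ _ HI1). apply (RInt_correct (V:=R_CompleteNormedModule)); auto. }
  assert (HB : Rabs (RInt H a c) <= 2 / lam).
  { destruct HD2 as [HD2|HD2].
    - set (G := fun x => - / D1 al b m x).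
      set (g := fun x => D2 al b m x / (D1 al b m x * D1 al b m x)).
      assert (Hdg : forall x, a <= x <= c -> is_derive G x (g x)).
      { intros x Hx. specialize (Hnz x Hx). unfold G, g, D1, D2 in *. auto_derive. auto. field. auto. }
      assert (Hcg : forall x, a <= x <= c -> continuous g x).
      { intros x Hx. specialize (Hnz x Hx). apply (ex_derive_continuous (K:=R_AbsRing) (V:=R_NormedModule)). unfold g, D1, D2 in *.
        auto_derive; repeat split; auto; try (intro Hc; apply Hnz; nra). }
      assert (HIg : is_RInt g a c (minus (G c) (G a))).
      { apply (is_RInt_derive G g); rewrite Hmin, Hmax; auto. }
      eapply Rle_trans. apply abs_RInt_le; auto.
      eapply Rle_trans. apply (RInt_le _ g); auto.
      { apply (ex_RInt_continuous (V:=R_CompleteNormedModule)). rewrite Hmin, Hmax. intros; apply continuous_comp; auto. apply continuous_Rabs. }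
      { eexists; eauto. }
      { intros x Hx. unfold H, g. unfold Rdiv. rewrite !Rabs_mult.
        assert (0 <= D2 al b m x) by (apply HD2; lra).
        assert (0 <= / (D1 al b m x * D1 al b m x)).
        { left; apply Rinv_0_lt_compat. assert (D1 al b m x <> 0) by (apply Hnz; lra). nra. }
        rewrite (Rabs_pos_eq (D2 _ _ _ _)), (Rabs_pos_eq (/ _)); auto.
        assert (Rabs (sin (P al b m th x)) <= 1) by apply Rabs_le, SIN_bound.
        rewrite Rmult_assoc. rewrite <- (Rmult_1_l (_ * / (D1 al b m x * D1 al b m x))) at 2.
        apply Rmult_le_compat_r; auto. apply Rmult_le_pos; auto; lra. }
      rewrite (is_RInt_unique _ _ _ _ HIg). unfold G, minus, plus, opp; simpl.
      assert (Rabs (/ D1 al b m a) <= / lam).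
      { rewrite <- (Rmult_1_l (/ D1 al b m a)). apply div_bound; auto; [apply HD1; lra| rewrite Rabs_R1; lra]. }
      assert (Rabs (/ D1 al b m c) <= / lam).
      { rewrite <- (Rmult_1_l (/ D1 al b m c)). apply div_bound; auto; [apply HD1; lra| rewrite Rabs_R1; lra]. }
      apply Rabs_le_between in H0. apply Rabs_le_between in H1.
      unfold Rdiv. lra.
    - set (G := fun x => / D1 al b m x).
      set (g := fun x => - D2 al b m x / (D1 al b m x * D1 al b m x)).
      assert (Hdg : forall x, a <= x <= c -> is_derive G x (g x)).
      { intros x Hx. specialize (Hnz x Hx). unfold G, g, D1, D2 in *. auto_derive. auto. field. auto. }
      assert (Hcg : forall x, a <= x <= c -> continuous g x).
      { intros x Hx. specialize (Hnz x Hx). apply (ex_derive_continuous (K:=R_AbsRing) (V:=R_NormedModule)). unfold g, D1, D2 in *.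
        auto_derive; repeat split; auto; try (intro Hc; apply Hnz; nra). }
      assert (HIg : is_RInt g a c (minus (G c) (G a))).
      { apply (is_RInt_derive G g); rewrite Hmin, Hmax; auto. }
      eapply Rle_trans. apply abs_RInt_le; auto.
      eapply Rle_trans. apply (RInt_le _ g); auto.
      { apply (ex_RInt_continuous (V:=R_CompleteNormedModule)). rewrite Hmin, Hmax. intros; apply continuous_comp; auto. apply continuous_Rabs. }
      { eexists; eauto. }
      { intros x Hx. unfold H, g. unfold Rdiv. rewrite !Rabs_mult.
        assert (D2 al b m x <= 0) by (apply HD2; lra).
        assert (0 <= / (D1 al b m x * D1 al b m x)).
        { left; apply Rinv_0_lt_compat. assert (D1 al b m x <> 0) by (apply Hnz; lra). nra. }
        rewrite (Rabs_left1 (D2 _ _ _ _)), (Rabs_pos_eq (/ _)); auto.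
        assert (Rabs (sin (P al b m th x)) <= 1) by apply Rabs_le, SIN_bound.
        rewrite Rmult_assoc. rewrite <- (Rmult_1_l (_ * / (D1 al b m x * D1 al b m x))) at 2.
        apply Rmult_le_compat_r; auto. apply Rmult_le_pos; auto; lra. }
      rewrite (is_RInt_unique _ _ _ _ HIg). unfold G, minus, plus, opp; simpl.
      assert (Rabs (/ D1 al b m a) <= / lam).
      { rewrite <- (Rmult_1_l (/ D1 al b m a)). apply div_bound; auto; [apply HD1; lra| rewrite Rabs_R1; lra]. }
      assert (Rabs (/ D1 al b m c) <= / lam).
      { rewrite <- (Rmult_1_l (/ D1 al b m c)). apply div_bound; auto; [apply HD1; lra| rewrite Rabs_R1; lra]. }
      apply Rabs_le_between in H0. apply Rabs_le_between in H1.
      unfold Rdiv. lra. }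
  fold f. rewrite Hf.
  assert (Rabs (F a) <= / lam) by (apply div_bound; auto; [apply HD1; lra| apply Rabs_le, SIN_bound]).
  assert (Rabs (F c) <= / lam) by (apply div_bound; auto; [apply HD1; lra| apply Rabs_le, SIN_bound]).
  apply Rabs_le_between in H0. apply Rabs_le_between in H1. apply Rabs_le_between in HB.
  apply Rabs_le_between. unfold Rdiv in *. lra.
Qed.

Lemma exp_le' x y : x <= y -> exp x <= exp y.
Proof. intros [H|H]; [left; apply exp_increasing; auto| subst; lra]. Qed.

Lemma mono al q x y : 0 < q*(al-1) -> x <= y -> q*exp((al-1)*x) <= q*exp((al-1)*y).
Proof.
  intros Hq Hxy. destruct (Rlt_or_le 1 al) as [H1|H1].
  - assert (0 < q) by nra. apply Rmult_le_compat_l; [lra|]. apply exp_le'. nra.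
  - assert (q < 0) by nra. assert (exp ((al-1)*y) <= exp ((al-1)*x)) by (apply exp_le'; nra). nra.
Qed.

Lemma split_mono (f : R -> R) a c : continuity f -> (forall x y, x <= y -> f x <= f y) -> a <= c ->
  exists z, a <= z <= c /\ (forall x, a <= x -> x < z -> f x <= 0) /\ (forall x, z < x -> x <= c -> 0 <= f x)
   /\ (a < z -> f z <= 0) /\ (z < c -> 0 <= f z).
Proof.
  intros Hc Hm Hac. destruct (Rle_lt_dec 0 (f a)) as [Ha|Ha].
  - exists a. repeat split; intros; try lra.
    apply Rle_trans with (f a); auto. apply Hm; lra.
  - destruct (Rle_lt_dec (f c) 0) as [Hc'|Hc'].
    + exists c. repeat split; intros; try lra.
      apply Rle_trans with (f c); auto. apply Hm; lra.
    + assert (a < c). { destruct Hac; auto. subst; lra. }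
      destruct (IVT f a c Hc H Ha Hc') as [z [Hz Hfz]].
      exists z. repeat split; intros; try lra.
      all: rewrite <- Hfz; apply Hm; lra.
Qed.

Definition B al b m x := b + m*al*exp((al-1)*x).
Definition B2 al b m x := b + m*(al*al)*exp((al-1)*x).

Lemma exp_al al x : exp (al*x) = exp x * exp((al-1)*x).
Proof. rewrite <- exp_plus. f_equal. ring. Qed.
Lemma D1_B al b m x : D1 al b m x = exp x * B al b m x.
Proof. unfold D1, B. rewrite exp_al. ring. Qed.
Lemma D2_B al b m x : D2 al b m x = exp x * B2 al b m x.
Proof. unfold D2, B2. rewrite exp_al. ring. Qed.
Lemma D2_D1 al b m x : D2 al b m x = D1 al b m x + m*al*(al-1) * exp(al*x).
Proof. unfold D1, D2. ring. Qed.
Lemma exp_ge1 al x : 0 < al -> 0 <= x -> 1 <= exp (al*x).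
Proof. intros. rewrite <- exp_0. apply exp_le'. nra. Qed.

Lemma cont_B al b m : continuity (B al b m).
Proof. intro x. apply continuity_pt_filterlim.
  apply (ex_derive_continuous (K:=R_AbsRing) (V:=R_NormedModule)). unfold B. auto_derive. auto. Qed.
Lemma cont_B2 al b m : continuity (B2 al b m).
Proof. intro x. apply continuity_pt_filterlim.
  apply (ex_derive_continuous (K:=R_AbsRing) (V:=R_NormedModule)). unfold B2. auto_derive. auto. Qed.

Lemma mvt_D1 al b m x y : x < y -> exists xi, D1 al b m y - D1 al b m x = D2 al b m xi * (y - x) /\ x < xi < y.
Proof. intros H. apply MVT_cor2; auto. intros. apply is_derive_Reals. apply D1_deriv. Qed.

Lemma ex_cos al b m th a c : ex_RInt (fun x => cos (P al b m th x)) a c.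
Proof. apply (ex_RInt_continuous (V:=R_CompleteNormedModule)). intros; apply cont_cosP. Qed.

Lemma triv al b m th a c : a <= c -> Rabs (RInt (fun x => cos (P al b m th x)) a c) <= c - a.
Proof.
  intros H. eapply Rle_trans. apply abs_RInt_le; auto. apply ex_cos.
  eapply Rle_trans. apply (RInt_le _ (fun _ => 1)); auto.
  { apply (ex_RInt_continuous (V:=R_CompleteNormedModule)). intros; apply continuous_comp. apply cont_cosP. apply continuous_Rabs. }
  { apply ex_RInt_const. }
  { intros. apply Rabs_le, COS_bound. }
  rewrite RInt_const. unfold scal; simpl; unfold mult; simpl. lra.
Qed.

Lemma Main al b m th Rr : 0 < al -> 0 < m*al*(al-1) -> 0 < Rr ->
  Rabs (RInt (fun x => cos (P al b m th x)) 0 Rr) <= 16 / (m*al*(al-1)) + 2.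
Proof.
  intros Hal HK HR. set (K := m*al*(al-1)) in *.
  set (f := fun x => cos (P al b m th x)).
  assert (HmB : forall x y, x <= y -> B al b m x <= B al b m y).
  { intros x y H. unfold B. apply Rplus_le_compat_l. apply mono; auto. }
  assert (HmB2 : forall x y, x <= y -> B2 al b m x <= B2 al b m y).
  { intros x y H. unfold B2. apply Rplus_le_compat_l. apply mono; auto.
    replace (m*(al*al)*(al-1)) with (K*al) by (unfold K; ring). nra. }
  destruct (split_mono (B al b m) 0 Rr (cont_B al b m) HmB) as [x0 [Hx0 [Ha1 [Ha2 [Ha3 Ha4]]]]]; [lra|].
  destruct (split_mono (B2 al b m) 0 Rr (cont_B2 al b m) HmB2) as [x3 [Hx3 [Hb1 [Hb2 [Hb3 Hb4]]]]]; [lra|].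
  assert (HDD : forall x, 0 <= x -> D1 al b m x + K <= D2 al b m x).
  { intros x Hx. rewrite D2_D1. fold K. assert (1 <= exp (al*x)) by (apply exp_ge1; auto). nra. }
  assert (S1n : forall x, B al b m x <= 0 -> D1 al b m x <= 0).
  { intros x H. rewrite D1_B. assert (0 < exp x) by apply exp_pos. nra. }
  assert (S1p : forall x, 0 <= B al b m x -> 0 <= D1 al b m x).
  { intros x H. rewrite D1_B. assert (0 < exp x) by apply exp_pos. nra. }
  assert (S2n : forall x, B2 al b m x <= 0 -> D2 al b m x <= 0).
  { intros x H. rewrite D2_B. assert (0 < exp x) by apply exp_pos. nra. }
  assert (S2p : forall x, 0 <= B2 al b m x -> 0 <= D2 al b m x).
  { intros x H. rewrite D2_B. assert (0 < exp x) by apply exp_pos. nra. }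
  set (p1 := Rmin x3 x0). set (p2 := Rmax p1 (x0-1)). set (p4 := Rmin (x0+1) Rr).
  assert (Hp1 : p1 <= x3 /\ p1 <= x0 /\ (p1 = x3 \/ p1 = x0)) by (unfold p1, Rmin; destruct (Rle_dec x3 x0); lra).
  assert (Hp2 : p1 <= p2 /\ x0 - 1 <= p2 /\ (p2 = p1 \/ p2 = x0 - 1)) by (unfold p2, Rmax; destruct (Rle_dec p1 (x0-1)); lra).
  assert (Hp4 : p4 <= x0+1 /\ p4 <= Rr /\ (p4 = x0+1 \/ p4 = Rr)) by (unfold p4, Rmin; destruct (Rle_dec (x0+1) Rr); lra).
  assert (Hsplit : RInt f 0 Rr = RInt f 0 p1 + (RInt f p1 p2 + (RInt f p2 x0 + (RInt f x0 p4 + RInt f p4 Rr)))).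
  { assert (E1 := RInt_Chasles (V:=R_CompleteNormedModule) f x0 p4 Rr (ex_cos _ _ _ _ _ _) (ex_cos _ _ _ _ _ _)).
    assert (E2 := RInt_Chasles (V:=R_CompleteNormedModule) f p2 x0 Rr (ex_cos _ _ _ _ _ _) (ex_cos _ _ _ _ _ _)).
    assert (E3 := RInt_Chasles (V:=R_CompleteNormedModule) f p1 p2 Rr (ex_cos _ _ _ _ _ _) (ex_cos _ _ _ _ _ _)).
    assert (E4 := RInt_Chasles (V:=R_CompleteNormedModule) f 0 p1 Rr (ex_cos _ _ _ _ _ _) (ex_cos _ _ _ _ _ _)).
    unfold plus in E1, E2, E3, E4; simpl in E1, E2, E3, E4.
    rewrite E1, E2, E3, E4. reflexivity. }
  assert (Bd1 : Rabs (RInt f 0 p1) <= 4 / K).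
  { destruct (Rle_lt_or_eq_dec 0 p1) as [Hlt|Heq]; [lra| |].
    - apply L1; auto; try lra.
      + intros x Hx. assert (D2 al b m x <= 0).
        { apply S2n. destruct (Rle_lt_or_eq_dec x x3) as [h|h]; [lra| apply Hb1; lra| rewrite h; apply Hb3; lra]. }
        assert (D1 al b m x + K <= D2 al b m x) by (apply HDD; lra).
        rewrite Rabs_left1; lra.
      + right. intros x Hx. apply S2n. destruct (Rle_lt_or_eq_dec x x3) as [h|h]; [lra| apply Hb1; lra| rewrite h; apply Hb3; lra].
    - rewrite <- Heq. eapply Rle_trans. apply triv; lra. unfold Rdiv. assert (0 < / K) by (apply Rinv_0_lt_compat; auto). lra. }
  assert (Bd2 : Rabs (RInt f p1 p2) <= 8 / K).
  { destruct (Rle_lt_or_eq_dec p1 p2) as [Hlt|Heq]; [lra| |].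
    - assert (Hq2 : p2 = x0 - 1) by lra.
      assert (Hq1 : p1 = x3) by lra.
      assert (HD2p : forall x, x3 <= x <= Rr -> 0 <= D2 al b m x).
      { intros x Hx. apply S2p. destruct (Rle_lt_or_eq_dec x3 x) as [h|h]; [lra| apply Hb2; lra| rewrite <- h; apply Hb4; lra]. }
      replace (8 / K) with (4 / (K/2)) by (field; lra).
      apply L1; auto; try lra.
      + intros x Hx. destruct (Rle_lt_dec (D1 al b m x) (-K/2)) as [h|h].
        * rewrite Rabs_left1; lra.
        * exfalso. destruct (mvt_D1 al b m x x0) as [xi [Exi Hxi]]; [lra|].
          destruct (mvt_D1 al b m x xi) as [eta [Eeta Heta]]; [lra|].
          assert (0 <= D2 al b m eta) by (apply HD2p; lra).
          assert (D1 al b m xi + K <= D2 al b m xi) by (apply HDD; lra).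
          assert (D1 al b m x0 <= 0) by (apply S1n, Ha3; lra).
          assert (0 <= D2 al b m eta * (xi - x)) by (apply Rmult_le_pos; lra).
          assert (K/2 < D2 al b m xi) by lra.
          assert (D2 al b m xi * 1 <= D2 al b m xi * (x0 - x)) by (apply Rmult_le_compat_l; lra).
          lra.
      + left. intros x Hx. apply HD2p. lra.
    - rewrite <- Heq. eapply Rle_trans. apply triv; lra. unfold Rdiv. assert (0 < / K) by (apply Rinv_0_lt_compat; auto). lra. }
  assert (Bd3 : Rabs (RInt f p2 x0) <= 1) by (eapply Rle_trans; [apply triv|]; lra).
  assert (Bd4 : Rabs (RInt f x0 p4) <= 1) by (eapply Rle_trans; [apply triv|]; lra).
  assert (Bd5 : Rabs (RInt f p4 Rr) <= 4 / K).
  { destruct (Rle_lt_or_eq_dec p4 Rr) as [Hlt|Heq]; [lra| |].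
    - assert (Hq : p4 = x0 + 1) by lra.
      assert (HD1p : forall x, x0 + 1 <= x <= Rr -> K <= D1 al b m x).
      { intros x Hx. destruct (mvt_D1 al b m x0 x) as [xi [Exi Hxi]]; [lra|].
        assert (0 <= D1 al b m xi) by (apply S1p, Ha2; lra).
        assert (D1 al b m xi + K <= D2 al b m xi) by (apply HDD; lra).
        assert (0 <= D1 al b m x0) by (apply S1p, Ha4; lra).
        assert (D2 al b m xi * 1 <= D2 al b m xi * (x - x0)) by (apply Rmult_le_compat_l; lra).
        lra. }
      apply L1; auto; try lra.
      + intros x Hx. assert (K <= D1 al b m x) by (apply HD1p; lra). rewrite Rabs_pos_eq; lra.
      + left. intros x Hx. assert (K <= D1 al b m x) by (apply HD1p; lra).
        assert (D1 al b m x + K <= D2 al b m x) by (apply HDD; lra). lra.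
    - rewrite Heq. eapply Rle_trans. apply triv; lra. unfold Rdiv. assert (0 < / K) by (apply Rinv_0_lt_compat; auto). lra. }
  fold f. rewrite Hsplit.
  apply Rabs_le_between in Bd1. apply Rabs_le_between in Bd2. apply Rabs_le_between in Bd3.
  apply Rabs_le_between in Bd4. apply Rabs_le_between in Bd5.
  apply Rabs_le_between. unfold Rdiv in *. lra.
Qed.

Lemma Kpos al s : 0 < al -> al <> 1 -> (s = 1 \/ s = -1) ->
  (0 < s*al*(al-1) /\ s*al*(al-1) = al * Rabs (al-1)) \/ (0 < (-s)*al*(al-1) /\ (-s)*al*(al-1) = al * Rabs (al-1)).
Proof.
  intros Hal H1 Hs. destruct (Rlt_or_le 1 al) as [h|h].
  - rewrite Rabs_pos_eq by lra. destruct Hs; subst; [left|right]; split; nra.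
  - rewrite Rabs_left by lra. destruct Hs; subst; [right|left]; split; nra.
Qed.

Lemma both al b s Rr : 0 < al -> al <> 1 -> (s = 1 \/ s = -1) -> 0 < Rr ->
  Rabs (RInt (fun x => cos (b*exp x + s*exp(al*x))) 0 Rr) <= 16 / (al*Rabs(al-1)) + 2 /\
  Rabs (RInt (fun x => sin (b*exp x + s*exp(al*x))) 0 Rr) <= 16 / (al*Rabs(al-1)) + 2.
Proof.
  intros Hal H1 Hs HR. destruct (Kpos al s Hal H1 Hs) as [[HK E]|[HK E]].
  - split.
    + rewrite (RInt_ext _ (fun x => cos (P al b s 0 x))).
      { rewrite <- E. apply Main; auto. }
      intros x _. unfold P. f_equal. ring.
    + rewrite (RInt_ext _ (fun x => cos (P al b s (-(PI/2)) x))).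
      { rewrite <- E. apply Main; auto. }
      intros x _. unfold P. rewrite cos_plus, cos_neg, sin_neg, cos_PI2, sin_PI2. lra.
  - split.
    + rewrite (RInt_ext _ (fun x => cos (P al (-b) (-s) 0 x))).
      { rewrite <- E. apply Main; auto. }
      intros x _. unfold P. rewrite <- cos_neg. f_equal. ring.
    + rewrite (RInt_ext _ (fun x => cos (P al (-b) (-s) (PI/2) x))).
      { rewrite <- E. apply Main; auto. }
      intros x _. unfold P. rewrite cos_plus, cos_PI2, sin_PI2.
      replace (- b * exp x + - s * exp (al * x)) with (- (b * exp x + s * exp (al * x))) by ring.
      rewrite sin_neg. lra.
Qed.

Theorem lemma3 (alpha : R) (Halpha : 0 < alpha) (Halpha1 : alpha <> 1) :
  exists Cst : R, forall (Rr b s : R), 0 < Rr -> (s = 1 \/ s = -1) ->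
    Cmod (@RInt C_R_CompleteNormedModule (fun x : R => cis (b * exp x + s * exp (alpha * x))) 0 Rr) <= Cst.
Proof.
  exists (2 * (16 / (alpha*Rabs(alpha-1)) + 2)).
  intros Rr b s HR Hs.
  set (Ic := RInt (fun x => cos (b*exp x + s*exp(alpha*x))) 0 Rr).
  set (Is := RInt (fun x => sin (b*exp x + s*exp(alpha*x))) 0 Rr).
  assert (Hc : is_RInt (fun x => cos (b*exp x + s*exp(alpha*x))) 0 Rr Ic).
  { apply (RInt_correct (V:=R_CompleteNormedModule)). apply (ex_RInt_continuous (V:=R_CompleteNormedModule)).
    intros. apply (ex_derive_continuous (K:=R_AbsRing) (V:=R_NormedModule)). auto_derive. auto. }
  assert (Hs' : is_RInt (fun x => sin (b*exp x + s*exp(alpha*x))) 0 Rr Is).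
  { apply (RInt_correct (V:=R_CompleteNormedModule)). apply (ex_RInt_continuous (V:=R_CompleteNormedModule)).
    intros. apply (ex_derive_continuous (K:=R_AbsRing) (V:=R_NormedModule)). auto_derive. auto. }
  assert (HI : @RInt C_R_CompleteNormedModule (fun x : R => cis (b * exp x + s * exp (alpha * x))) 0 Rr = (Ic, Is)).
  { apply (is_RInt_unique (V:=C_R_CompleteNormedModule)).
    apply (is_RInt_fct_extend_pair (U:=R_NormedModule) (V:=R_NormedModule)); simpl; auto. }
  rewrite HI. destruct (both alpha b s Rr Halpha Halpha1 Hs HR) as [B1 B2]. fold Ic Is in B1, B2.
  eapply Rle_trans. apply Cmod_2Rmax. simpl.
  assert (Hs2 : sqrt 2 <= 2).
  { rewrite <- (sqrt_square 2) at 2 by lra. apply sqrt_le_1_alt. lra. }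
  assert (Hm : Rmax (Rabs Ic) (Rabs Is) <= 16 / (alpha*Rabs(alpha-1)) + 2) by (apply Rmax_lub; auto).
  assert (0 <= Rmax (Rabs Ic) (Rabs Is)) by (eapply Rle_trans; [apply Rabs_pos| apply Rmax_l]).
  assert (0 <= sqrt 2) by apply sqrt_pos.
  nra.
Qed.
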